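(* Let $f\colon\mathbb{Z}_{\ge1}\times\mathbb{Z}_{\ge1}\to\mathbb{Z}$ be any function such that for all $k,h\ge1$ every finite digraph $G$ with $\delta^+(G)\geq f(k,h)$ contains $S^-_{k,h}$ as a subgraph. Let $k\geq 1$ and $\ell\geq 2$. Then every finite digraph $G$ with $\delta^+(G)\geq f(k,3k\ell^{k+1})+2k\ell^k$ contains $T(k,\ell)$ as a subgraph.
   Context: Digraphs are finite, have no loops and no multiple copies of the same edge, but may contain two edges in opposite directions between a pair of vertices. $\delta^+(G)$ is the minimum out-degree. $S^-_{k,h}$ is the $(k-1)$-subdivision of the in-star with $h$ leaves: a centre vertex together with $h$ directed paths of length $k$ ending at the centre, pairwise sharing only the centre. (A function $f$ as in the hypothesis exists by a result of Aboulker, Cohen, Havet, Lochet, Moura and Thomassé.) $B^+_{k,\ell}$ is the complete $\ell$-ary tree of depth $k$ with all edges oriented away from the root. $T(k,\ell)$ is the oriented tree obtained from $B^+_{k,\ell}$ by identifying each leaf with the centre of a new (disjoint) copy of $S^-_{k,\ell}$. Containing a digraph as a subgraph means having a subgraph isomorphic to it. *)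

(* Defs.v *)
From mathcomp Require Import all_boot all_order all_algebra.
Set Implicit Arguments. Unset Strict Implicit. Unset Printing Implicit Defensive.

(* Being a relation, there
   are no multiple copies of an edge; both x->y and y->x may be present. *)
Definition digraph (V : finType) (E : rel V) : Prop :=
  (forall x, ~~ E x x) /\ 0 < #|V|.

Definition outdeg (V : finType) (E : rel V) (x : V) : nat := #|[set y | E x y]|.

Definition mindeg_ge (V : finType) (E : rel V) (d : int) : Prop :=
  forall x, (d <= (outdeg E x)%:Z)%R.

Definition contains (V : finType) (E : rel V) (W : finType) (F : rel W) : Prop :=
  exists phi : W -> V, injective phi /\ forall x y, F x y -> E (phi x) (phi y).

(* S^-_{k,h}: vertex None is the centre; Some (i, j) is the vertex of the
   i-th path at distance j+1 from the centre (j < k). *)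
Definition Sm_vert (k h : nat) := option ('I_h * 'I_k)%type.

Definition Sm_edge (k h : nat) : rel (Sm_vert k h) :=
  fun u v =>
    match u, v with
    | Some (i, j), Some (i', j') => (i == i') && (val j == (val j').+1)
    | Some (_, j), None => val j == 0
    | _, _ => false
    end.

(* Vertices of B^+_{k,l}: words over 'I_l of length at most k
   (the root is the empty word); the edges go from a word s to s ++ [:: a]. *)
Definition B_vert (k l : nat) := {n : 'I_k.+1 & n.-tuple 'I_l}.

Definition B_word (k l : nat) (u : B_vert k l) : seq 'I_l := val (tagged u).

Definition B_edge (k l : nat) : rel (B_vert k l) :=
  fun u v => (size (B_word v) == (size (B_word u)).+1) &&
             (B_word u == take (size (B_word u)) (B_word v)).

(* T(k,l): the tree B^+_{k,l} (inl vertices) together with, for each leaf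
   t (a word of length k), a copy of S^-_{k,l} whose non-centre vertices are
   inr (t, (i, j)) and whose centre is identified with the leaf t. *)
Definition T_vert (k l : nat) :=
  (B_vert k l + (k.-tuple 'I_l * ('I_l * 'I_k)))%type.

Definition T_edge (k l : nat) : rel (T_vert k l) :=
  fun u v =>
    match u, v with
    | inl a, inl b => B_edge a b
    | inr (t, (i, j)), inr (t', (i', j')) =>
        (t == t') && (i == i') && (val j == (val j').+1)
    | inr (t, (_, j)), inl b => (val j == 0) && (B_word b == val t)
    | inl _, inr _ => false
    end.

(* Main.v *)
Require Import Defs.
From mathcomp Require Import all_boot all_order all_algebra zify.
Set Implicit Arguments. Unset Strict Implicit. Unset Printing Implicit Defensive.

Lemma disjP (T : finType) (A B : {set T}) :
  reflect (forall x, x \in A -> x \in B -> False) [disjoint A & B].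
Proof.
rewrite disjoints_subset; apply: (iffP subsetP) => H x xA.
  by move=> xB; have := H x xA; rewrite inE xB.
by rewrite inE; apply/negP => xB; apply: (H x).
Qed.

Lemma card_cover (T I : finType) (P : pred I) (A : I -> {set T}) (N : {set T}) :
  N \subset \bigcup_(i | P i) A i -> #|N| <= \sum_(i | P i) #|N :&: A i|.
Proof.
move=> sub.
have -> : \sum_(i | P i) #|N :&: A i| = \sum_(i | P i) \sum_(y in N) (y \in A i : nat).
  apply: eq_bigr => i _; rewrite -sum1_card big_mkcond /= [RHS]big_mkcond /=.
  by apply: eq_bigr => y; rewrite inE; case: (y \in N); case: (y \in A i).
rewrite exchange_big /= -sum1_card; apply: leq_sum => y yN.
have /bigcupP [i Pi yA] := subsetP sub y yN.
by rewrite (bigD1 i) //= yA.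
Qed.

Lemma pick_free (X V : finType) (F : X -> {set V}) (cs : {set X}) (U : {set V}) :
  (forall x y, x \in cs -> y \in cs -> x != y -> [disjoint F x & F y]) ->
  #|U| < #|cs| -> exists2 x, x \in cs & [disjoint F x & U].
Proof.
move=> dis lt.
case: (pickP (mem U)) => [v0 _|U0]; last first.
  have /card_gt0P [x xc] : 0 < #|cs| by apply: leq_ltn_trans lt.
  exists x => //; apply/disjP => y _; rewrite [y \in U]U0.
  done.
case: (boolP [exists x in cs, [disjoint F x & U]]) => [/exists_inP [x xc dx]|].
  by exists x.
move=> /exists_inPn H; exfalso; move: lt; apply/negP; rewrite -leqNgt.
pose g x := odflt v0 [pick v in F x :&: U].
have gP x : x \in cs -> g x \in F x :&: U.
  move=> xc; rewrite /g; case: pickP => [v -> //|/= none].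
  have := H x xc; move=> /negP; case; apply/disjP => y yF yU.
  by have := none y; rewrite inE yF yU.
rewrite -(card_in_imset (f := g)); last first.
  move=> x y xc yc gxy; apply/eqP/negPn/negP => nxy.
  have := gP x xc; have := gP y yc; rewrite -gxy !inE => /andP [Fy _] /andP [Fx _].
  by move/disjP: (dis x y xc yc nxy) => /(_ (g x) Fx); apply.
apply: subset_leq_card; apply/subsetP => _ /imsetP [x xc ->].
by have := gP x xc; rewrite inE => /andP [].
Qed.

Lemma greedy (W V X : finType) (x0 : X) (rk sz : W -> nat)
  (img : W -> X -> {set V}) (valid : W -> (W -> X) -> X -> bool) :
 (forall w a a' x, (forall w', rk w' < rk w -> a w' = a' w') -> valid w a x = valid w a' x) ->
 (forall w a x, valid w a x -> #|img w x| <= sz w) ->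
 (forall w a, (forall w', rk w' < rk w -> valid w' a (a w')) ->
    exists cs : {set X}, [/\ \sum_(w' | (w' != w) && (rk w' <= rk w)) sz w' < #|cs|,
        {in cs, forall x, valid w a x} &
        (forall x y, x \in cs -> y \in cs -> x != y -> [disjoint img w x & img w y])]) ->
 exists a : W -> X, (forall w, valid w a (a w)) /\
   (forall w w', w != w' -> [disjoint img w (a w) & img w' (a w')]).
Proof.
move=> loc szP cand.
suff: forall n (S : {set W}), #|S| <= n ->
   (forall w w', w \in S -> rk w' < rk w -> w' \in S) ->
   exists a : W -> X, (forall w, w \in S -> valid w a (a w)) /\
     (forall w w', w \in S -> w' \in S -> w != w' -> [disjoint img w (a w) & img w' (a w')]).
  move=> /(_ #|W| setT (max_card _)) [] // a [H1 H2].
  by exists a; split=> [w|w w']; [apply: H1|apply: H2]; rewrite inE.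
elim=> [|n IH] S.
  rewrite leqn0 => /eqP /cards0_eq -> _; exists (fun _ => x0).
  by split=> w; rewrite inE.
move=> cardS closed.
case: (set_0Vmem S) => [->|[w0 w0S]].
  by exists (fun _ => x0); split=> w; rewrite inE.
case: (@arg_maxnP _ w0 (mem S) rk w0S) => w wS0 wmax.
have wS : w \in S := wS0.
have wmx v : v \in S -> rk v <= rk w := wmax v.
pose S' := S :\ w.
have S'P v : v \in S' = (v != w) && (v \in S) by rewrite !inE.
have [a' [va' da']] : exists a' : W -> X, (forall w, w \in S' -> valid w a' (a' w)) /\
     (forall w w', w \in S' -> w' \in S' -> w != w' -> [disjoint img w (a' w) & img w' (a' w')]).
  apply: IH.
    by move: cardS; rewrite (cardsD1 w S) wS add1n ltnS.
  move=> v v'; rewrite !S'P => /andP [vw vS] lt; rewrite (closed v) // andbT.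
  apply/eqP => ew; move: lt; rewrite ew ltnNge; have := wmx v vS.
  by rewrite /= => ->.
have lowv w' : rk w' < rk w -> valid w' a' (a' w').
  move=> lt; apply: va'; rewrite S'P (closed w) // andbT.
  by apply/eqP => e; move: lt; rewrite e ltnn.
have [cs [ccard cvalid cdis]] := cand w a' lowv.
pose U := \bigcup_(v in S') img v (a' v).
have Ucard : #|U| < #|cs|.
  apply: leq_ltn_trans ccard.
  apply: leq_trans (card_cover (subxx U)) _.
  rewrite big_mkcond [X in _ <= X]big_mkcond /=; apply: leq_sum => v _.
  rewrite S'P; case: (boolP (v != w)) => //= vw; case: (boolP (v \in S)) => //= vS.
  rewrite (wmx v vS) /=; apply: leq_trans (subset_leq_card (subsetIr _ _)) _.
  by apply: szP (va' v _); rewrite S'P vw.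
have [x xc xdis] := pick_free cdis Ucard.
pose a v := if v == w then x else a' v.
have aeq v : rk v <= rk w -> v != w -> a v = a' v by move=> _ /negbTE; rewrite /a => ->.
have vloc v : rk v <= rk w -> valid v a (a v) = valid v a' (a v).
  move=> le; apply: loc => v' lt; apply: aeq; first by apply: ltnW (leq_trans lt le).
  by apply/eqP => e; move: lt; rewrite e ltnNge le.
exists a; split.
  move=> v vS; rewrite vloc ?wmx // /a; case: eqP => [->|/eqP vw]; first exact: cvalid.
  by apply: va'; rewrite S'P vw.
have key v : v \in S -> v != w -> [disjoint img w (a w) & img v (a v)].
  move=> vS vw; rewrite /a eqxx (negbTE vw).
  apply: disjointWr xdis; apply/subsetP => y yi; apply/bigcupP; exists v => //.
  by rewrite S'P vw.
move=> v v' vS v'S vv'.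
case: (eqVneq v w) => [evw|vw].
  by rewrite evw; apply: key => //; rewrite -evw eq_sym.
case: (eqVneq v' w) => [ev'w|v'w].
  by rewrite ev'w disjoint_sym; apply: key.
rewrite /a (negbTE vw) (negbTE v'w); apply: da' => //; rewrite S'P ?vw ?v'w //.
Qed.

Lemma B_size k l (u : B_vert k l) : size (B_word u) = tag u.
Proof. by rewrite /B_word size_tuple. Qed.

Lemma B_size_le k l (u : B_vert k l) : size (B_word u) <= k.
Proof. by rewrite B_size -ltnS ltn_ord. Qed.

Lemma B_word_inj k l : injective (@B_word k l).
Proof.
case=> n t [m s]; rewrite /B_word /= => e.
have enm : n = m by apply: val_inj; rewrite /= -(size_tuple t) -(size_tuple s) e.
subst m; congr existT; exact: val_inj.
Qed.

Lemma B_edge_size k l (u v : B_vert k l) :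
  B_edge u v -> size (B_word v) = (size (B_word u)).+1.
Proof. by case/andP => /eqP. Qed.

Lemma B_parent_uniq k l (u1 u2 v : B_vert k l) : B_edge u1 v -> B_edge u2 v -> u1 = u2.
Proof.
move=> e1 e2; have s1 := B_edge_size e1; have s2 := B_edge_size e2.
have ss : size (B_word u1) = size (B_word u2) by apply: succn_inj; rewrite -s1 -s2.
case/andP: e1 => _ /eqP w1; case/andP: e2 => _ /eqP w2.
by apply: B_word_inj; rewrite w1 w2 ss.
Qed.

Lemma B_parent_ex k l (v : B_vert k l) : 0 < size (B_word v) -> exists u, B_edge u v.
Proof.
case: v => n t; rewrite /B_word /= size_tuple => n0.
have lt : n.-1 < k.+1 by apply: leq_ltn_trans (leq_pred n) (ltn_ord n).
have sz : size (take n.-1 t) == n.-1 by rewrite size_takel // size_tuple leq_pred.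
exists (existT (fun m : 'I_k.+1 => m.-tuple 'I_l) (Ordinal lt) (Tuple sz)).
rewrite /B_edge /B_word /= (eqP sz) size_tuple prednK // eqxx /=.
done.
Qed.

Definition leaf k l (t : k.-tuple 'I_l) : B_vert k l :=
  existT (fun n : 'I_k.+1 => n.-tuple 'I_l) ord_max t.

Lemma leaf_word k l (t : k.-tuple 'I_l) : B_word (leaf t) = val t.
Proof. by []. Qed.

Lemma B_card k l : #|{: B_vert k l}| = \sum_(n < k.+1) l ^ n.
Proof.
rewrite /B_vert card_tagged sumnE big_map big_enum /=.
by apply: eq_bigr => n _; rewrite card_tuple card_ord.
Qed.

Lemma geom_lt k l : 2 <= l -> \sum_(n < k.+1) l ^ n < 2 * l ^ k.
Proof.
move=> l2; elim: k => [|k IH]; first by rewrite big_ord_recr big_ord0.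
rewrite big_ord_recr /=.
have e : l ^ k.+1 = l * l ^ k := expnS _ _.
have : 2 * l ^ k <= l * l ^ k by rewrite leq_mul2r l2 orbT.
move: IH; set s := \sum_(_ < _) _; rewrite e; lia.
Qed.

Lemma sum_le_const (I : finType) (P : pred I) (F : I -> nat) c :
  (forall i, P i -> F i <= c) -> \sum_(i | P i) F i <= #|I| * c.
Proof.
move=> H; rewrite -sum_nat_const big_mkcond /=; apply: leq_sum => i _.
by case: ifP => // /H.
Qed.

Lemma outdeg_sub (V : finType) (E : rel V) (U : {set V}) (u : {x : V | x \in U}) :
  outdeg (fun x y : {x : V | x \in U} => E (val x) (val y)) u = #|[set y | E (val u) y] :&: U|.
Proof.
rewrite /outdeg -(card_imset _ val_inj); apply: eq_card => y.
rewrite !inE; apply/imsetP/andP => [[z]|[]]; first by rewrite inE => ? ->; split=> //; exact: valP.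
by move=> Ey yU; exists (Sub y yU); rewrite ?inE //= SubK.
Qed.

Definition embb (k H : nat) (V : finType) (E : rel V) (g : {ffun Sm_vert k H -> V}) :=
  injectiveb g && [forall x, [forall y, Sm_edge x y ==> E (g x) (g y)]].

Definition Cset (k H : nat) (V : finType) (E : rel V) : {set V} :=
  [set c | [exists g : {ffun Sm_vert k H -> V}, embb E g && (g None == c)]].

Arguments Cset k H {V} E.
Definition sigm (k H : nat) (V : finType) (E : rel V) (c : V) : Sm_vert k H -> V :=
  if [pick g : {ffun Sm_vert k H -> V} | embb E g && (g None == c)] is Some g then g else fun _ => c.

Arguments sigm k H {V} E c.
Lemma sigmP k H (V : finType) (E : rel V) c : c \in Cset k H E ->
  [/\ injective (sigm k H E c), (forall x y, Sm_edge x y -> E (sigm k H E c x) (sigm k H E c y))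
    & sigm k H E c None = c].
Proof.
rewrite inE /sigm => /existsP [g0 g0P]; case: pickP => [g /andP [/andP [inj ed] /eqP gc]|/(_ g0)];
  last by rewrite g0P.
split=> //; first exact/injectiveP.
by move=> x y; move/forallP: ed => /(_ x) /forallP /(_ y) /implyP.
Qed.

Lemma Cset_contains k H (V : finType) (E : rel V) (phi : Sm_vert k H -> V) :
  injective phi -> (forall x y, Sm_edge x y -> E (phi x) (phi y)) -> phi None \in Cset k H E.
Proof.
move=> inj ed; rewrite inE; apply/existsP; exists (finfun phi).
rewrite /embb ffunE eqxx andbT; apply/andP; split.
  by apply/injectiveP => x y; rewrite !ffunE; apply: inj.
by apply/forallP => x; apply/forallP => y; apply/implyP; rewrite !ffunE; apply: ed.
Qed.

Fixpoint Mset (k H : nat) (V : finType) (E : rel V) (d i : nat) : {set V} :=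
  if i is i'.+1 then [set v | d <= #|[set y | E v y] :&: Mset k H E d i'|]
  else Cset k H E.

Arguments Mset k H {V} E d i.
Lemma Mk_ne k H (V : finType) (E : rel V) (d m : nat) :
  0 < k -> 0 < m -> (forall x, ~~ E x x) -> 0 < #|V| -> (forall x, m + k * d <= outdeg E x) ->
  (forall (W : finType) (E' : rel W), digraph E' -> mindeg_ge E' m%:Z ->
       contains E' (@Sm_edge k H)) ->
  exists v, v \in Mset k H E d k.
Proof.
move=> k0 m0 loop V0 deg Hyp.
set M := Mset k H E d.
case: (pickP (mem (M k))) => [v vk|Mk0]; first by exists v.
exfalso; have Mk v : v \notin M k by apply/negbT; apply: Mk0.
have small v i : i < k -> v \notin M i.+1 -> #|[set y | E v y] :&: M i| < d.
  by move=> _; rewrite /M /= inE -ltnNge.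
have stepA v : exists i : 'I_k, v \in M i.
  case: (boolP [exists i : 'I_k, v \in M i]) => [/existsP //|/existsPn notin].
  exfalso.
  pose U := [set u | [forall i : 'I_k, u \notin M i]].
  have vU : v \in U by rewrite inE; apply/forallP => i; apply: notin.
  pose E' := fun x y : {x : V | x \in U} => E (val x) (val y).
  have [] := Hyp _ E'.
  - split; first by move=> x; apply: loop.
    by apply/card_gt0P; exists (Sub v vU).
  - move=> u; rewrite lez_nat outdeg_sub.
    set N := [set y | E (val u) y].
    have uU := valP u; rewrite inE in uU.
    have h1 := cardsID U N.
    have h2 : #|N :\: U| <= k * (d.-1).
      have cov : N :\: U \subset \bigcup_(i : 'I_k | true) M i.
        apply/subsetP => y; rewrite !inE => /andP [/forallPn [i]]; rewrite negbK => yi _.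
        by apply/bigcupP; exists i.
      apply: leq_trans (card_cover cov) _.
      have := @sum_le_const _ (fun _ => true) (fun i : 'I_k => #|(N :\: U) :&: M i|) d.-1.
      rewrite card_ord; apply => i _.
      have: #|N :&: M i| < d.
        apply: small => //; case: (ltnP i.+1 k) => [lt|ge].
          by move/forallP: uU => /(_ (Ordinal lt)).
        have -> : i.+1 = k by apply/eqP; rewrite eqn_leq ge ltn_ord.
        exact: Mk.
      move=> lt; rewrite -ltnS prednK; last by apply: leq_ltn_trans lt.
      apply: leq_ltn_trans lt; apply: subset_leq_card; apply/subsetP => y.
      by rewrite !inE => /andP [/andP [_ ->] ->].
    have := deg (val u); rewrite /outdeg -/N.
    have dd : d <= d.-1.+1 by rewrite leqSpred.
    have : k * d <= k * d.-1 + k by rewrite -mulnSr leq_mul2l dd orbT.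
    move: h1 h2; rewrite setIC; lia.
  move=> g [ginj ged].
  have : val (g None) \in M 0.
    rewrite /M /=; apply: (Cset_contains (phi := fun x => val (g x))).
      by move=> x y /val_inj /ginj.
    by move=> x y /ged.
  by have := valP (g None); rewrite inE => /forallP /(_ (Ordinal k0)) /negbTE ->.
have stepB s : forall v, exists i, [/\ s <= i, i < k & v \in M i].
  elim: s => [|s IH] v.
    by have [i vi] := stepA v; exists i.
  set N := [set y | E v y].
  case: (boolP [exists i : 'I_k, (s <= i) && (d <= #|N :&: M i|)]).
    move=> /existsP [i /andP [si di]].
    have vi : v \in M i.+1 by rewrite /M /= inE.
    exists i.+1; split=> //; case: (ltnP i.+1 k) => // ge.
    have e : i.+1 = k by apply/eqP; rewrite eqn_leq ge ltn_ord.
    by move: vi; rewrite e (negbTE (Mk v)).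
  move=> /existsPn small'; exfalso.
  have cov : N \subset \bigcup_(i : 'I_k | s <= i) M i.
    apply/subsetP => y _; have [i [si ik yi]] := IH y.
    by apply/bigcupP; exists (Ordinal ik).
  have := card_cover cov.
  have : \sum_(i : 'I_k | s <= i) #|N :&: M i| <= #|'I_k| * d.-1.
    apply: sum_le_const => i si; have := small' i; rewrite si /= -ltnNge => lt.
    by rewrite -ltnS prednK //; apply: leq_ltn_trans lt.
  rewrite card_ord; have := deg v; rewrite /outdeg -/N.
  have dd : d <= d.-1.+1 by rewrite leqSpred.
  have : k * d <= k * d.-1 + k by rewrite -mulnSr leq_mul2l dd orbT.
  move=> h1 h2 h3 h4; have := leq_trans h4 h3; lia.
have [v0 _] := card_gt0P V0.
have [i [ki ik _]] := stepB k v0.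
by move: (leq_ltn_trans ki ik); rewrite ltnn.
Qed.

Theorem theorem3p3 (f : nat -> nat -> int) :
  (forall k h : nat, 1 <= k -> 1 <= h ->
     forall (V : finType) (E : rel V), digraph E -> mindeg_ge E (f k h) ->
       contains E (@Sm_edge k h)) ->
  forall k l : nat, 1 <= k -> 2 <= l ->
    forall (V : finType) (E : rel V), digraph E ->
      mindeg_ge E (f k (3 * k * l ^ k.+1)%N + (2 * k * l ^ k)%N%:Z)%R ->
      contains E (@T_edge k l).
Proof.
move=> Hf k l k1 l2 V E [loop V0] mdeg.
set H := (3 * k * l ^ k.+1)%N in mdeg.
have lk : 0 < l ^ k by rewrite expn_gt0 (leq_trans _ l2).
have lk1 : l ^ k.+1 = l * l ^ k := expnS _ _.
have H0 : 0 < H by rewrite /H lk1; move: lk; nia.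
have F1 : (0 < f k H)%R.
  case: (Num.Theory.ltrP 0 (f k H)) => // Fle; exfalso.
  have [] := Hf k H k1 H0 unit (fun _ _ => false).
  - by rewrite /digraph card_unit.
  - by move=> x; apply: Order.POrderTheory.le_trans Fle _.
  move=> phi [inj _].
  have e : phi None = phi (Some (Ordinal H0, Ordinal k1)) by case: (phi None); case: (phi _).
  by have := inj _ _ e.
set m := absz (f k H).
have Fm : f k H = (Posz m) by rewrite /m abszE Num.Theory.gtr0_norm.
have m0 : 0 < m by rewrite /m absz_gt0; apply: contraTneq F1 => ->.
set d := (2 * l ^ k)%N.
have deg x : m + k * d <= outdeg E x.
  have := mdeg x; rewrite Fm -PoszD lez_nat /d; lia.
have Hyp' : forall (W : finType) (E' : rel W), digraph E' -> mindeg_ge E' (Posz m) ->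
       contains E' (@Sm_edge k H).
  by move=> W E' dE' mE'; apply: Hf => //; rewrite Fm.
have [r rM] := Mk_ne k1 m0 loop V0 deg Hyp'.
have Bd : #|{: B_vert k l}| < d by rewrite B_card /d geom_lt.
pose M := Mset k H E d.
pose sg := sigm k H E.
pose p0 : 'I_H := Ordinal H0.
pose W := (B_vert k l + (k.-tuple 'I_l * 'I_l))%type.
pose X := (V * 'I_H)%type.
pose rk (w : W) := match w with inl b => size (B_word b) | inr _ => k.+1 end.
pose sz (w : W) := match w with inl _ => 1 | inr _ => k end.
pose img (w : W) (x : X) : {set V} := match w with
  | inl _ => [set x.1] | inr _ => [set sg x.1 (Some (x.2, j)) | j : 'I_k] end.
pose valid (w : W) (a : W -> X) (x : X) := match w with
  | inl b => (x.1 \in M (k - size (B_word b))) &&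
             [forall b', B_edge b' b ==> E (a (inl b')).1 x.1]
  | inr p => x.1 == (a (inl (leaf p.1))).1 end.
have totsz : \sum_(w : W) sz w = #|{: B_vert k l}| + k * (l ^ k * l).
  rewrite big_sumType /= sum1_card sum_nat_const card_prod card_tuple !card_ord mulnC.
  done.
have [a [va da]] : exists a : W -> X, (forall w, valid w a (a w)) /\
   (forall w w', w != w' -> [disjoint img w (a w) & img w' (a w')]).
  apply: (greedy (r, p0) (rk := rk) (sz := sz)).
  - move=> [b|p] a a' x eqa /=.
      congr andb; apply: eq_forallb => b'; case e: (B_edge b' b) => //=.
      by rewrite eqa // /rk (B_edge_size e).
    by rewrite eqa // /rk leaf_word size_tuple.
  - move=> [b|p] a x _ /=; first by rewrite cards1.
    by apply: leq_trans (leq_imset_card _ _) _; rewrite card_ord.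
  - move=> w a lowv.
    have bnd : \sum_(w' | (w' != w) && (rk w' <= rk w)) sz w' <= \sum_(w' : W | rk w' <= rk w) sz w'.
      rewrite [X in X <= _]big_mkcond [X in _ <= X]big_mkcond /=; apply: leq_sum => w' _.
      by case: (w' != w); case: (rk w' <= rk w).
    have bndT : \sum_(w' : W | rk w' <= rk w) sz w' <= \sum_(w' : W) sz w'.
      by rewrite [X in _ <= X](bigID (fun w' => rk w' <= rk w)) /= leq_addr.
    case: w lowv bnd bndT => [b|[t i]] lowv bnd bndT.
    + have bk : \sum_(w' : W | rk w' <= rk (inl b)) sz w' <= #|{: B_vert k l}|.
        rewrite big_sumType /= [X in _ + X]big_pred0; last first.
          by move=> p; rewrite /rk ltnNge (leq_trans (B_size_le b)).
        rewrite addn0 -sum1_card big_mkcond /=; apply: leq_sum => b' _.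
        by case: ifP.
      case: (posnP (size (B_word b))) => [s0|spos].
      * exists [set (v, p0) | v in M k]; split.
        - rewrite big1 /=; last first.
            move=> [b'|p] /andP [ne le]; rewrite /rk s0 in le; last by [].
            move: le; rewrite leqn0 => /eqP /size0nil e'.
            by move: ne; rewrite (B_word_inj (etrans e' (esym (size0nil s0)))) eqxx.
          rewrite card_imset; last by move=> ? ? [].
          by apply/card_gt0P; exists r.
        - move=> _ /imsetP [v vM ->] /=; rewrite s0 subn0 vM /=.
          apply/forallP => b'; apply/implyP => /B_edge_size; rewrite s0 //.
        - move=> _ _ /imsetP [v _ ->] /imsetP [v' _ ->] ne /=.
          by rewrite disjoints1 inE; apply: contraNneq ne => ->.
      * have [b' eb'] := B_parent_ex spos.
        have ltb : rk (inl b') < rk (inl b) by rewrite /rk (B_edge_size eb').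
        have := lowv _ ltb; rewrite /= => /andP [yM _].
        set y := (a (inl b')).1 in yM.
        have ek : k - size (B_word b') = (k - size (B_word b)).+1.
          have := B_edge_size eb'; have := B_size_le b; lia.
        rewrite ek /M /= inE in yM.
        exists [set (z, p0) | z in [set z | E y z] :&: M (k - size (B_word b))]; split.
        - rewrite card_imset; last by move=> ? ? [].
          apply: leq_ltn_trans bnd _; apply: leq_ltn_trans bk _; exact: leq_trans Bd yM.
        - move=> _ /imsetP [z zS ->] /=; rewrite !inE in zS; case/andP: zS => Ez zM.
          rewrite zM /=; apply/forallP => b''; apply/implyP => eb''.
          by rewrite (B_parent_uniq eb'' eb').
        - move=> _ _ /imsetP [v _ ->] /imsetP [v' _ ->] ne /=.
          by rewrite disjoints1 inE; apply: contraNneq ne => ->.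
    + have lt : rk (inl (leaf t)) < rk (inr (t, i)) by rewrite /rk leaf_word size_tuple.
      have := lowv _ lt; rewrite /= leaf_word size_tuple subnn => /andP [cC _].
      set c := (a (inl (leaf t))).1 in cC.
      have [sinj _ _] := sigmP cC.
      exists [set (c, p) | p : 'I_H]; split.
      - rewrite card_imset; last by move=> ? ? [].
        rewrite card_ord; apply: leq_ltn_trans bnd _; apply: leq_ltn_trans bndT _.
        rewrite totsz /H lk1.
        have h : l ^ k <= k * (l * l ^ k).
          by rewrite -[X in X <= _]mul1n leq_mul // leq_pmull // (leq_trans _ l2).
        move: Bd; rewrite /d; lia.
      - by move=> _ /imsetP [p _ ->] /=.
      - move=> _ _ /imsetP [p _ ->] /imsetP [p' _ ->] ne /=.
        apply/disjP => z /imsetP [j _ ->] /imsetP [j' _] /sinj [e _].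
        by rewrite e eqxx in ne.
have cC t : (a (inl (leaf t))).1 \in Cset k H E.
  by have := va (inl (leaf t)); rewrite /= leaf_word size_tuple subnn => /andP [].
have cE t i : (a (inr (t, i))).1 = (a (inl (leaf t))).1.
  by have := va (inr (t, i)); rewrite /= => /eqP.
pose phi (u : T_vert k l) : V := match u with
  | inl b => (a (inl b)).1
  | inr (t, (i, j)) => sg (a (inr (t, i))).1 (Some ((a (inr (t, i))).2, j)) end.
pose blk (u : T_vert k l) : W := match u with
  | inl b => inl b | inr (t, (i, j)) => inr (t, i) end.
have phi_img u : phi u \in img (blk u) (a (blk u)).
  case: u => [b|[t [i j]]] /=; first by rewrite inE.
  by apply/imsetP; exists j.
exists phi; split.
  move=> u v e; case: (eqVneq (blk u) (blk v)) => [eb|nb]; last first.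
    have := da _ _ nb; move/disjP => /(_ (phi u) (phi_img u)); rewrite e => /(_ (phi_img v)).
    by [].
  case: u v e eb => [b|[t [i j]]] [b'|[t' [i' j']]] //= e.
    by case=> ->.
  case=> et ei; subst t' i'; move: e.
  have [sinj _ _] := sigmP (cC t); rewrite /sg cE => /sinj [ej].
  by rewrite ej.
move=> [b|[t [i j]]] [b'|[t' [i' j']]] //= ed.
- by have := va (inl b'); rewrite /= => /andP [_ /forallP /(_ b) /implyP /(_ ed)].
- case/andP: ed => j0 /eqP wt.
  have eb : b' = leaf t by apply: B_word_inj; rewrite wt leaf_word.
  have [_ sed sc] := sigmP (cC t).
  rewrite /sg cE eb -{2}sc; apply: sed => /=; exact: j0.
- case/andP: ed => /andP [/eqP et /eqP ei] ej; subst t' i'.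
  have [_ sed _] := sigmP (cC t).
  rewrite /sg cE; apply: sed => /=; by rewrite eqxx ej.
Qed.
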